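(* Suppose Assumptions A1–A3 hold. Let $\bm{X}_t=\{\bm{x}_1,\dots,\bm{x}_t\}$ be generated by density-based exploration, $\bm{x}_{t+1}\in\arg\min_{\bm{x}\in\mathcal{X}}W_t(\bm{x})$ (equivalently $\arg\max\hat\sigma_t$), where $W_t$ uses bandwidth $\ell_t$ at iteration $t$. Then (i) if $\ell_t\equiv\ell$ is fixed, $\inf_t h_{\mathcal{X},\bm{X}_t}\le R_\Psi\ell$; (ii) there exists a bandwidth sequence $\ell_t\to0$ such that $\inf_t h_{\mathcal{X},\bm{X}_t}=0$.
   Context: A1: $\mathcal{X}\subset\mathbb{R}^d$ compact, convex, nonempty interior. A2: $f$ continuous (not used in the selection rule). A3: kernel $k(\bm{x},\bm{x}')=\Psi((\bm{x}-\bm{x}')/\ell)$ with bandwidth $\ell>0$, where $\Psi:\mathbb{R}^d\to[0,\infty)$ has support contained in $B(\bm{0},R_\Psi)$, is continuous at $\bm{0}$, $\Psi(\bm{0})>0$, $\sup\Psi\le M_\Psi$. $W_t(\bm{x})=\sum_{i=1}^tk(\bm{x},\bm{x}_i)$, $\hat\sigma_t=W_t^{-1/2}$ with $c/0=\infty$. Fill distance $h_{\mathcal{X},\bm{X}_t}=\sup_{\bm{x}\in\mathcal{X}}\min_{i\le t}\|\bm{x}-\bm{x}_i\|$. *)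

(* Defs.v *)
From HB Require Import structures.
From mathcomp Require Import all_boot all_order all_algebra.
From mathcomp Require Import all_classical all_reals all_analysis.
Set Implicit Arguments. Unset Strict Implicit. Unset Printing Implicit Defensive.
Import Order.TTheory GRing.Theory Num.Theory.
Import numFieldNormedType.Exports.
Local Open Scope classical_set_scope.
Local Open Scope ring_scope.

(* Euclidean norm on R^d (the library norm on 'rV_d is the max norm). *)
Definition enorm (R : realType) (d : nat) (v : 'rV[R]_d) : R :=
  Num.sqrt (\sum_(i < d) v ord0 i ^+ 2).

Definition kern (R : realType) (d : nat) (Psi : 'rV[R]_d -> R) (ell : R)
  (x x' : 'rV[R]_d) : R := Psi (ell^-1 *: (x - x')).

Definition Wt (R : realType) (d : nat) (Psi : 'rV[R]_d -> R) (ell : R)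
  (pts : nat -> 'rV[R]_d) (t : nat) (x : 'rV[R]_d) : R :=
  \sum_(1 <= i < t.+1) kern Psi ell x (pts i).

(* Fill distance h_{X, X_t} = sup_{x in X} min_{1<=i<=t} |x - x_i|
   (extended-real valued; equals +oo for t = 0 by the empty-min convention). *)
Definition fill_distance (R : realType) (d : nat) (X : set 'rV[R]_d)
  (pts : nat -> 'rV[R]_d) (t : nat) : \bar R :=
  ereal_sup [set (\big[Order.min/+oo%E]_(1 <= i < t.+1) (enorm (x - pts i))%:E)
            | x in X].

(* The sequence is generated by density-based exploration with bandwidths ell_t:
   for every t >= 0, x_{t+1} in X and x_{t+1} in argmin_{x in X} W_t(x)
   (for t = 0, W_0 = 0 so this only says x_1 in X). *)
Definition density_exploration (R : realType) (d : nat) (X : set 'rV[R]_d)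
  (Psi : 'rV[R]_d -> R) (ell : nat -> R) (pts : nat -> 'rV[R]_d) : Prop :=
  forall t : nat, X (pts t.+1) /\
    (forall y, X y -> Wt Psi (ell t) pts t (pts t.+1) <= Wt Psi (ell t) pts t y).

(* Main.v *)
Require Import Defs.
From HB Require Import structures.
From mathcomp Require Import all_boot all_order all_algebra.
From mathcomp Require Import all_classical all_reals all_analysis.
Import Order.TTheory GRing.Theory Num.Theory.
Import numFieldNormedType.Exports.
Local Open Scope classical_set_scope.
Local Open Scope ring_scope.

Lemma packing (R : realType) (d : nat) (X : set 'rV[R]_d) (eps : R) :
  compact X -> 0 < eps -> exists N : nat, forall q : nat -> 'rV[R]_d,
  (forall m, X (q m)) -> exists i j : nat, (i < j <= N)%N /\ `|q i - q j| < eps.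
Proof.
move=> cX e0.
have e20 : 0 < eps / 2 by rewrite divr_gt0.
have := cX; rewrite compact_cover => /(_ _ X (fun c => ball c (eps / 2))).
case.
- by move=> c _; exact: ball_open.
- by move=> x Xx; exists x => //; exact: ballxx.
move=> D' _ cov; exists (size (finmap.enum_fset D')) => q Xq.
have /choice[c Hc] : forall m, exists c, c \in finmap.enum_fset D' /\ ball c (eps/2) (q m).
  by move=> m; have [c /= cD bc] := cov _ (Xq m); exists c.
have : ~~ uniq (map c (iota 0 (size (finmap.enum_fset D')).+1)).
  apply/negP => U.
  have := uniq_leq_size U; rewrite size_map size_iota.
  move=> /(_ (finmap.enum_fset D')); rewrite ltnn => H.
  suff /H : {subset [seq c i | i <- iota 0 (size (finmap.enum_fset D')).+1] <= finmap.enum_fset D'} by [].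
  move=> y.
  by move=> /mapP[m _ ->]; have [] := Hc m.
move=> /(uniqPn (c 0%N))[i [j [ij]]]; rewrite size_map size_iota => jN.
rewrite (nth_map 0%N) ?size_iota ?(ltn_trans ij) // (nth_map 0%N) ?size_iota //.
rewrite !nth_iota ?(ltn_trans ij) // !add0n => cij.
exists i, j; split; first by rewrite ij -ltnS.
have [_ bi] := Hc i; have [_ bj] := Hc j.
move: bi bj; rewrite -!ball_normE /= cij => bi bj.
rewrite (splitr eps); apply: le_lt_trans (ler_distD (c j) _ _) _.
by rewrite distrC ltrD.
Qed.

Lemma enormZ (R : realType) (d : nat) (a : R) (v : 'rV[R]_d) :
  enorm (a *: v) = `|a| * enorm v.
Proof.
rewrite /enorm.
under eq_bigr => i _ do rewrite mxE exprMn.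
by rewrite -mulr_sumr sqrtrM ?sqr_ge0 // sqrtr_sqr.
Qed.

Lemma cont_pos (R : realType) (d : nat) (Psi : 'rV[R]_d -> R) :
  {for 0, continuous Psi} -> 0 < Psi 0 ->
  exists2 r : R, 0 < r & forall z, `|z| < r -> Psi z != 0.
Proof.
move=> cP P0.
have H0 : \forall t \near (0 : 'rV[R]_d), 0 < Psi t.
  by apply: (cvgr_gt _ cP).
have [r r0 H] := (nbhs_ballP _ _).1 H0; exists r => // z zr.
apply/lt0r_neq0/H; rewrite -ball_normE /= sub0r normrN; exact: zr.
Qed.

Lemma sep (R : realType) (d : nat) (X : set 'rV[R]_d) (Psi : 'rV[R]_d -> R)
  (RPsi r ell : R) (pts : nat -> 'rV[R]_d) (t : nat) :
  (forall z, 0 <= Psi z) -> (forall z, Psi z != 0 -> enorm z <= RPsi) ->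
  (forall z, `|z| < r -> Psi z != 0) -> 0 < ell ->
  (forall y, X y -> Wt Psi ell pts t (pts t.+1) <= Wt Psi ell pts t y) ->
  ((RPsi * ell)%:E < fill_distance X pts t)%E ->
  forall i, (0 < i <= t)%N -> r * ell <= `|pts t.+1 - pts i|.
Proof.
move=> P0 Psupp Pr ell0 Hmin /ereal_sup_gt[_ [x Xx <-] Hx] i it.
have sep1 : forall k, (0 < k <= t)%N -> Psi (ell^-1 *: (x - pts k)) = 0.
  move=> k kt; apply/eqP; apply: contraTT Hx => /Psupp.
  rewrite enormZ gtr0_norm ?invr_gt0 // -leNgt => H.
  apply: (@bigmin_inf_seq _ _ _ _ _ k).
    by rewrite mem_index_iota.
    by [].
  by rewrite lee_fin mulrC -ler_pdivrMl.
have W0 : Wt Psi ell pts t x = 0.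
  by rewrite /Wt big_nat_cond big1 // => k /andP[/andP[k1 kt] _]; rewrite /kern sep1 // k1.
have := Hmin _ Xx; rewrite W0 => Hle.
have Wge : forall k, (0 < k <= t)%N -> kern Psi ell (pts t.+1) (pts k) <= 0.
  move=> k kt; apply: le_trans Hle.
  rewrite /Wt (bigD1_seq k) ?mem_index_iota ?iota_uniq //=.
  by rewrite lerDl sumr_ge0 // => j _; rewrite /kern P0.
rewrite leNgt; apply/negP => H.
have := Wge i it; rewrite /kern.
have : Psi (ell^-1 *: (pts t.+1 - pts i)) != 0.
  apply: Pr; rewrite normrZ gtr0_norm ?invr_gt0 // mulrC.
  by rewrite ltr_pdivrMr.
by move=> nz le; move: nz; rewrite eq_le le P0.
Qed.

Definition blockS (g : nat -> nat) (k : nat) : nat := (\sum_(0 <= j < k) (g j).+1)%N.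
Definition kappa (g : nat -> nat) (t : nat) : nat :=
  (\max_(k < t.+1 | (blockS g k <= t)%N) k)%N.

Lemma blockS_mono g m n : (m <= n)%N -> (blockS g m <= blockS g n)%N.
Proof.
move/subnK => <-; elim: (n - m)%N => [|p IH]; first by rewrite add0n.
by rewrite addSn /blockS big_nat_recr //= (leq_trans IH) // leq_addr.
Qed.

Lemma blockS_ge g k : (k <= blockS g k)%N.
Proof.
elim: k => [|k IH] //; rewrite /blockS big_nat_recr //=.
by rewrite -addn1 leq_add.
Qed.

Lemma kappa_ge g k t : (blockS g k <= t)%N -> (k <= kappa g t)%N.
Proof.
move=> kt; have kt1 : (k < t.+1)%N by rewrite ltnS (leq_trans (blockS_ge g k)).
exact: (@leq_bigmax_cond _ (fun i : 'I_t.+1 => blockS g i <= t)%N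
  (fun i : 'I_t.+1 => nat_of_ord i) (Ordinal kt1)).
Qed.

Lemma kappaE g k t : (blockS g k <= t < blockS g k.+1)%N -> kappa g t = k.
Proof.
move=> /andP[kt tk]; apply/eqP; rewrite eqn_leq kappa_ge // andbT.
apply/bigmax_leqP => i /= it; rewrite leqNgt; apply/negP => ki.
by move: (leq_trans tk (blockS_mono g _ _ ki)); rewrite leqNgt ltnS it.
Qed.

Lemma le0_final (R : realType) (x : \bar R) (c : R) : 0 <= c ->
  (forall k : nat, x <= (c / k.+1%:R)%:E)%E -> (x <= 0)%E.
Proof.
move=> c0 H; case: x H => [r| |] H //; last by have := H 0%N.
rewrite lee_fin leNgt; apply/negP => r0.
set k := Num.truncn (c / r).
have := H k; rewrite lee_fin ler_pdivlMr // -ler_pdivlMl // mulrC => h.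
by have := lt_le_trans (truncnS_gt (c / r)) h; rewrite ltxx.
Qed.

Lemma ell_cvg (R : realType) (g : nat -> nat) :
  (fun t => ((kappa g t).+1%:R : R)^-1) @ \oo --> 0.
Proof.
apply/cvgrPdist_lt => e e0.
set k := Num.truncn (e^-1).
near=> t; rewrite sub0r normrN ger0_norm // invf_plt ?posrE //.
apply: lt_le_trans (truncnS_gt _) _; rewrite ler_nat ltnS.
apply: kappa_ge; near: t; exact: nbhs_infty_ge.
Unshelve. all: by end_near.
Qed.

Theorem mainTheorem6 (R : realType) (d : nat) (X : set 'rV[R]_d)
  (Psi : 'rV[R]_d -> R) (RPsi MPsi : R) :
  (* A1 *)
  compact X -> convex_set (X : set (convex_lmodType 'rV[R]_d)) ->
  (X°) !=set0 ->
  (* A3 *)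
  (forall z, 0 <= Psi z) ->
  (forall z, Psi z != 0 -> enorm z <= RPsi) ->
  {for 0, continuous Psi} -> 0 < Psi 0 ->
  (forall z, Psi z <= MPsi) ->
  (* (i) fixed bandwidth *)
  (forall (ell : R) (pts : nat -> 'rV[R]_d), 0 < ell ->
     density_exploration X Psi (fun _ => ell) pts ->
     (ereal_inf [set fill_distance X pts t | t in [set t : nat | (0 < t)%N]]
       <= (RPsi * ell)%:E)%E)
  /\
  (* (ii) a vanishing bandwidth sequence *)
  (exists ell : nat -> R, (forall t, 0 < ell t) /\ ell @ \oo --> 0 /\
     forall pts : nat -> 'rV[R]_d, density_exploration X Psi ell pts ->
       ereal_inf [set fill_distance X pts t | t in [set t : nat | (0 < t)%N]]
         = 0%E).
Proof.
move=> cX _ [x0 /interior_subset X0] P0 Psupp cP Ppos _.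
have [r r0 Pr] := cont_pos _ _ _ cP Ppos.
have RP0 : 0 <= RPsi.
  by apply: le_trans (Psupp 0 (lt0r_neq0 Ppos)); rewrite /enorm sqrtr_ge0.
split.
  move=> ell pts ell0 Hex; rewrite leNgt; apply/negP => Hlt.
  have [N HN] := packing _ _ _ _ cX (mulr_gt0 r0 ell0).
  have [i [j [/andP[ij jN] Hd]]] := HN (fun m => pts m.+1) (fun m => (Hex m).1).
  have Hh : ((RPsi * ell)%:E < fill_distance X pts j)%E.
    apply: lt_le_trans Hlt (ereal_inf_lbound _); exists j => //.
    exact: leq_ltn_trans ij.
  have := sep _ _ _ _ _ _ _ _ _ P0 Psupp Pr ell0 (Hex j).2 Hh i.+1.
  by rewrite ij => /(_ isT); rewrite leNgt distrC Hd.
have /choice[g Hg] : forall k : nat, exists N : nat, forall q : nat -> 'rV[R]_d,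
    (forall m, X (q m)) -> exists i j : nat,
      (i < j <= N)%N /\ `|q i - q j| < r / k.+1%:R.
  by move=> k; apply: packing => //; rewrite divr_gt0.
exists (fun t => ((kappa g t).+1%:R : R)^-1); split => //; split.
  exact: (ell_cvg R g).
move=> pts Hex; apply/le_anti/andP; split.
  apply: (le0_final _ _ _ RP0) => k; rewrite leNgt; apply/negP => Hlt.
  have [i [j [/andP[ij jN] Hd]]] :=
    Hg k (fun m => pts (blockS g k + m).+1) (fun m => (Hex _).1).
  set t := (blockS g k + j)%N.
  have kt : kappa g t = k.
    apply: kappaE; rewrite leq_addr /= /blockS big_nat_recr //= -/(blockS g k).
    by rewrite /t ltn_add2l ltnS.
  have Hh : ((RPsi * ((kappa g t).+1%:R)^-1)%:E < fill_distance X pts t)%E.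
    rewrite kt; apply: lt_le_trans Hlt (ereal_inf_lbound _); exists t => //.
    by rewrite /= /t addn_gt0 (leq_ltn_trans _ ij) ?orbT.
  have ellp : 0 < ((kappa g t).+1%:R : R)^-1 by rewrite invr_gt0.
  have := sep _ _ _ _ _ _ _ _ _ P0 Psupp Pr ellp (Hex t).2 Hh (blockS g k + i).+1.
  rewrite /t ltn_add2l ij => /(_ isT); rewrite -/t kt.
  by rewrite leNgt distrC -/t; move: Hd => /= ->.
apply: le_ereal_inf_tmp => _ [t t0 <-].
apply: le_trans (ereal_sup_ubound _); last first.
  by exists x0.
apply: le_bigmin => // i _; rewrite lee_fin /enorm sqrtr_ge0 //.
Qed.
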